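(* Let $\rho$ be an indecomposable representation of $D^{2,2,2}$, and for $a\in D^{2,2,2}$ write $$S(a)=\sum_{p=1}^3\varphi_p(\Phi^+\rho(a))\subseteq X_0.$$ 1. If $v_1,v_2,v_3\in D^{2,2,2}$ are perfect, then $S(v_1v_2v_3)=S(v_1)\cap S(v_2)\cap S(v_3)$. 2. If $v$ is perfect and $u\in D^{2,2,2}$ is arbitrary, then $S(vu)=S(v)\cap S(u)$.
   Context: $D^{2,2,2}$ is the modular lattice generated by $x_1,y_1,x_2,y_2,x_3,y_3$ subject only to $x_i\subseteq y_i$ ($i=1,2,3$), with a greatest element $I$ adjoined. Meet is written $ab$, join $a+b$. A representation $\rho$ of $D^{2,2,2}$ in a finite-dimensional vector space $X_0$ is a lattice morphism from $D^{2,2,2}$ to the subspace lattice of $X_0$, with $\rho(I)=X_0$. Write $X_i=\rho(x_i)\subseteq Y_i=\rho(y_i)$. $\rho$ is indecomposable if $X_0\neq0$ and there is no decomposition $X_0=X'\oplus X''$ with $X',X''\neq0$ and $\rho(a)=(\rho(a)\cap X')+(\rho(a)\cap X'')$ for all $a$. An element $a$ is perfect if $\rho(a)\in\{0,X_0\}$ for every indecomposable $\rho$. Put $R=Y_1\oplus Y_2\oplus Y_3$ and $X^1_0=\{(\eta_1,\eta_2,\eta_3)\in R:\sum\eta_i=0\}$. Let $G'_i\subseteq R$ be the triples with $i$-th coordinate in $X_i$, and $H'_i\subseteq R$ the triples with $i$-th coordinate $0$. $\Phi^+\rho$ is the representation in $X^1_0$ with $\Phi^+\rho(y_i)=G'_i\cap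 X^1_0$, $\Phi^+\rho(x_i)=H'_i\cap X^1_0$, $\Phi^+\rho(I)=X^1_0$. The elementary map $\varphi_p:X^1_0\to X_0$ is $(\eta_1,\eta_2,\eta_3)\mapsto\eta_p$; $\varphi_p(S)$ denotes the image of a subspace $S$. *)

(* Defs.v *)
From HB Require Import structures.
From mathcomp Require Import all_boot all_order all_algebra.
Set Implicit Arguments. Unset Strict Implicit. Unset Printing Implicit Defensive.
Import GRing.Theory.
Local Open Scope ring_scope.

(* Elements of D^{2,2,2} are represented by lattice terms over the six
   generators x_i, y_i (i : 'I_3) and the adjoined top I.  Since a
   representation is a lattice morphism determined by the images of the
   generators (subject to x_i <= y_i), the value of an element under any
   representation is the evaluation of any term representing it. *)
Inductive dterm : Type :=
  | Tx of 'I_3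
  | Ty of 'I_3
  | TI
  | Tmeet of dterm & dterm
  | Tjoin of dterm & dterm.

Section Eval.
Variables (K : fieldType) (vT : vectType K).
Variables (top : {vspace vT}) (X Y : 'I_3 -> {vspace vT}).
Fixpoint deval (a : dterm) : {vspace vT} :=
  match a with
  | Tx i => X i
  | Ty i => Y i
  | TI => top
  | Tmeet a b => (deval a :&: deval b)%VS
  | Tjoin a b => (deval a + deval b)%VS
  end.
End Eval.

(* rho is a representation of D^{2,2,2} in X_0 = fullv *)
Definition is_rep (K : fieldType) (vT : vectType K) (X Y : 'I_3 -> {vspace vT}) :=
  forall i, (X i <= Y i)%VS.

Definition rho_eval (K : fieldType) (vT : vectType K) (X Y : 'I_3 -> {vspace vT})
  (a : dterm) : {vspace vT} := deval fullv X Y a.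

Definition indecomposable (K : fieldType) (vT : vectType K)
  (X Y : 'I_3 -> {vspace vT}) : Prop :=
  is_rep X Y /\ (fullv : {vspace vT}) != 0%VS /\
  ~ (exists X' X'' : {vspace vT},
        [/\ X' != 0%VS, X'' != 0%VS, directv (X' + X''),
            (X' + X'' = fullv)%VS &
            forall a, rho_eval X Y a
                      = (rho_eval X Y a :&: X' + rho_eval X Y a :&: X'')%VS]).

Definition perfect (K : fieldType) (a : dterm) : Prop :=
  forall (vT : vectType K) (X Y : 'I_3 -> {vspace vT}),
    indecomposable X Y ->
    rho_eval X Y a = 0%VS \/ rho_eval X Y a = fullv.

Section PhiPlus.
Variables (K : fieldType) (vT : vectType K).
Definition triple := (vT * vT * vT)%type.

Definition coord3 (p : 'I_3) (e : triple) : vT :=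
  match val p with 0 => e.1.1 | 1 => e.1.2 | _ => e.2 end.

Definition phi (p : 'I_3) : 'Hom(triple, vT) := linfun (coord3 p).

Definition sum3 : 'Hom(triple, vT) := linfun (fun e : triple => e.1.1 + e.1.2 + e.2).

Variables (X Y : 'I_3 -> {vspace vT}).

Definition Rsp : {vspace triple} := (\bigcap_(j < 3) (phi j @^-1: Y j))%VS.
Definition X01 : {vspace triple} := (Rsp :&: lker sum3)%VS.
Definition Gp (i : 'I_3) : {vspace triple} := (Rsp :&: (phi i @^-1: X i))%VS.
Definition Hp (i : 'I_3) : {vspace triple} := (Rsp :&: lker (phi i))%VS.

Definition PhiPlus_eval (a : dterm) : {vspace triple} :=
  deval X01 (fun i => Hp i :&: X01)%VS (fun i => Gp i :&: X01)%VS a.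

Definition Ssp (a : dterm) : {vspace vT} :=
  (\sum_(p < 3) (phi p @: PhiPlus_eval a))%VS.
End PhiPlus.

(* Main.v *)
Require Import Defs.
From HB Require Import structures.
From mathcomp Require Import all_boot all_order all_algebra zify.
From Stdlib Require Import Classical.
Set Implicit Arguments. Unset Strict Implicit. Unset Printing Implicit Defensive.
Import GRing.Theory.
Local Open Scope ring_scope.
Local Open Scope vspace_scope.

Section Prelim.
Variables (K : fieldType) (vT : vectType K).

Lemma coord3_lin (p : 'I_3) : linear (@coord3 K vT p).
Proof.
move=> k x y; rewrite /coord3; case: (val p) => [|[|n]] //=.
Qed.
HB.instance Definition _ p := GRing.isLinear.Build K (triple vT) vT _ (@coord3 K vT p) (coord3_lin p).

Lemma phiE p e : phi vT p e = coord3 p e.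
Proof. by rewrite /phi lfunE. Qed.

Definition sum3f (e : triple vT) : vT := (e.1.1 + e.1.2 + e.2)%R.
Lemma sum3_lin : linear sum3f.
Proof.
move=> k x y; rewrite /sum3f /= !scalerDr.
move: (k *: x.1.1)%R (k *: x.1.2)%R (k *: x.2)%R y.1.1 y.1.2 y.2 => a b c d e f.
by rewrite [X in (X + _ = _)%R]addrACA [LHS]addrACA.
Qed.
HB.instance Definition _ := GRing.isLinear.Build K (triple vT) vT _ sum3f sum3_lin.

Lemma sum3E e : sum3 vT e = (e.1.1 + e.1.2 + e.2)%R.
Proof. by rewrite /sum3 (lfunE (sum3f : {linear _ -> _})). Qed.
End Prelim.
Lemma alg (G : zmodType) (a b xV xD hD : G) : (a - xV - (a - b - (xV + xD) - hD) = b + xD + hD)%R.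
Proof.
rewrite !opprB.
apply/eqP; rewrite -subr_eq0; apply/eqP.
rewrite !opprD !addrA.
rewrite (addrC _ hD) -(addrA hD) subrK.
by rewrite (addrAC _ (- a)) addrK (addrAC _ xD) addrK addrK subrr.
Qed.

Section Gen.
Variables (K : fieldType) (wT : vectType K).
Implicit Types A B C : {vspace wT}.
Lemma modl A B C : (A <= C)%VS -> ((A + B) :&: C = A + B :&: C)%VS.
Proof.
move=> sAC; apply/eqP; rewrite eqEsubv; apply/andP; split.
  apply/subvP => x /memv_capP [/memv_addP [a aA [b bB ->]] xC].
  apply: memv_add => //; rewrite memv_cap bB /=.
  have -> : b = (a + b) - a by rewrite addrC addKr.
  by rewrite memvB // (subvP sAC).
by rewrite subv_add subv_cap addvSl sAC /= capvS ?addvSr ?subvv.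
Qed.
Lemma addvACA A B C (D : {vspace wT}) : (A + B + (C + D) = A + C + (B + D))%VS.
Proof. by rewrite -!addvA; congr (A + _)%VS; rewrite !addvA (addvC B C). Qed.
Lemma capv_sub A C : (A <= C)%VS -> forall B, (B :&: C) :&: A = B :&: A.
Proof. by move=> sAC B; rewrite -capvA (capv_idPr sAC). Qed.
Lemma capvII A B C : (A :&: C) :&: (B :&: C) = (A :&: B) :&: C.
Proof.
apply/eqP; rewrite eqEsubv; apply/andP; split; apply/subvP => x;
rewrite !memv_cap; [case/andP => /andP [a c] /andP [b _] | case/andP => /andP [a b] c];
by rewrite a b c.
Qed.
End Gen.

Section Main.
Variables (K : fieldType) (vT : vectType K) (X Y : 'I_3 -> {vspace vT}).
Local Notation tT := (triple vT).
Local Notation P := (PhiPlus_eval X Y).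
Local Notation W0 := (X01 Y).

Lemma memRsp e : reflect (forall j, coord3 j e \in Y j) (e \in Rsp Y).
Proof.
rewrite memvE; apply: (iffP subv_bigcapP) => H j.
- by move: (H j isT); rewrite -memvE -memv_preim phiE.
- by move=> _; rewrite -memvE -memv_preim phiE.
Qed.

Lemma P_sub a : (P a <= W0)%VS.
Proof.
elim: a => [i|i||a IHa b IHb|a IHa b IHb] /=; rewrite ?capvSr ?subvv //.
- exact: subv_trans (capvSl _ _) IHa.
- by rewrite subv_add IHa IHb.
Qed.

Section Transport.
Variables (C C' : {vspace tT}).
Hypotheses (hCC : (C + C' = W0)%VS) (hcap : (C :&: C' = 0)%VS)
  (hcomp : forall a, P a = (P a :&: C + P a :&: C')%VS).

Lemma sCW : (C <= W0)%VS. Proof. by rewrite -hCC addvSl. Qed.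

Lemma join_restrict a b : ((P a + P b) :&: C = P a :&: C + P b :&: C)%VS.
Proof.
have -> : (P a + P b = (P a :&: C + P b :&: C) + (P a :&: C' + P b :&: C'))%VS.
  by rewrite addvACA -!hcomp.
rewrite modl ?subv_add ?capvSr //.
suff -> : ((P a :&: C' + P b :&: C') :&: C = 0)%VS by rewrite addv0.
apply/eqP; rewrite -subv0 -hcap capvC; apply: capvS (subvv _) _.
by rewrite subv_add !capvSr.
Qed.

Definition jm : 'Hom(subvs_of C, tT) := linfun vsval.
Lemma jE u : jm u = vsval u. Proof. by rewrite lfunE. Qed.
Lemma j_ker : lker jm == 0%VS.
Proof. by apply/lker0P => u v; rewrite !jE; apply: subvs_inj. Qed.
Lemma j_img : limg jm = C.
Proof.
apply/eqP; rewrite eqEsubv; apply/andP; split; apply/subvP => x.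
  by move=> /memv_imgP [u _ ->]; rewrite jE subvsP.
by move=> xC; rewrite -(vsprojK xC) -jE memv_img ?memvf.
Qed.

Definition Xt i := (jm @^-1: (P (Tx i) :&: C))%VS.
Definition Yt i := (jm @^-1: (P (Ty i) :&: C))%VS.

Lemma transport a : (jm @: deval fullv Xt Yt a = P a :&: C)%VS.
Proof.
elim: a => [i|i||a IHa b IHb|a IHa b IHb].
- by rewrite /= lpreimK // j_img capvSr.
- by rewrite /= lpreimK // j_img capvSr.
- by rewrite j_img /=; apply/esym/capv_idPr/sCW.
- rewrite /= lker0_img_cap ?j_ker // IHa IHb.
  by rewrite capvII.
- by rewrite /= limgD IHa IHb join_restrict.
Qed.

Lemma transport_indec : C != 0%VS ->
  ~ (exists C1 C2, [/\ C1 != 0%VS, C2 != 0%VS, (C1 :&: C2 = 0)%VS, (C1 + C2 = C)%VS &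
      forall a, (P a :&: C = (P a :&: C) :&: C1 + (P a :&: C) :&: C2)%VS]) ->
  indecomposable Xt Yt.
Proof.
move=> nzC nodec; split; [|split].
- move=> i; apply: lpreimS; apply: capvS; last exact: subvv.
  rewrite /=; apply: capvS; last exact: subvv.
  apply: capvS; first exact: subvv.
  by rewrite -lpreim0 lpreimS ?sub0v.
- apply: contra nzC => /eqP h; by rewrite -j_img h limg0.
move=> [X1 [X2 [nz1 nz2 dir sum hc]]]; apply: nodec.
exists (jm @: X1), (jm @: X2); split.
- by apply: contra nz1; rewrite -!subv0 -(limg0 jm) limg_ker0 ?j_ker.
- by apply: contra nz2; rewrite -!subv0 -(limg0 jm) limg_ker0 ?j_ker.
- by rewrite -lker0_img_cap ?j_ker // (directv_addP dir) limg0.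
- by rewrite -limgD sum j_img.
move=> a; rewrite -transport /rho_eval in hc *.
by rewrite {1}(hc a) limgD !lker0_img_cap ?j_ker.
Qed.
End Transport.

Definition goodD v C D := [/\ (D <= C)%VS, (P v :&: C + D = C)%VS,
  ((P v :&: C) :&: D = 0)%VS &
  forall a, (P a :&: C = P a :&: (P v :&: C) + P a :&: D)%VS].

Lemma good0 v : goodD v 0%VS 0%VS.
Proof. by split; rewrite ?capv0 ?addv0 ?subvv // => a; rewrite !capv0 addv0. Qed.

Lemma summand_split C C' C1 C2 :
  (C + C' = W0)%VS -> (C :&: C' = 0)%VS ->
  (forall a, P a = (P a :&: C + P a :&: C')%VS) ->
  (C1 :&: C2 = 0)%VS -> (C1 + C2 = C)%VS ->
  (forall a, (P a :&: C = (P a :&: C) :&: C1 + (P a :&: C) :&: C2)%VS) ->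
  [/\ (C1 + (C2 + C') = W0)%VS, (C1 :&: (C2 + C') = 0)%VS &
   forall a, P a = (P a :&: C1 + P a :&: (C2 + C'))%VS].
Proof.
move=> hCC hcap hcomp h12 hs12 hc12.
have s1 : (C1 <= C)%VS by rewrite -hs12 addvSl.
have s2 : (C2 <= C)%VS by rewrite -hs12 addvSr.
have hsum : (C1 + (C2 + C') = W0)%VS by rewrite addvA hs12.
split => //.
- apply/eqP; rewrite -dimv_eq0.
  have e1 := dimv_sum_cap C C'; rewrite hCC hcap dimv0 in e1.
  have e2 := dimv_sum_cap C1 C2; rewrite hs12 h12 dimv0 in e2.
  have e3 := dimv_sum_cap C2 C'.
  have e4 := dimv_sum_cap C1 (C2 + C'); rewrite hsum in e4.
  apply/eqP; lia.
- move=> a; apply/eqP; rewrite eqEsubv; apply/andP; split.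
    rewrite {1}(hcomp a) (hc12 a) !capv_sub // -addvA.
    apply: addvS; first exact: subvv.
    by rewrite subv_add !capvS ?subvv ?addvSl ?addvSr.
  by rewrite subv_add !capvSl.
Qed.

Lemma split_step v : perfect K v -> forall n C C', (\dim C <= n)%N ->
  (C + C' = W0)%VS -> (C :&: C' = 0)%VS ->
  (forall a, P a = (P a :&: C + P a :&: C')%VS) ->
  exists D, goodD v C D.
Proof.
move=> hv; elim=> [|n IH] C C' hdim hCC hcap hcomp.
  have /eqP -> : C == 0%VS by rewrite -dimv_eq0 -leqn0.
  by exists 0%VS; apply: good0.
have [/eqP -> | nzC] := boolP (C == 0%VS); first by exists 0%VS; apply: good0.
have [[C1 [C2 [nz1 nz2 h12 hs12 hc12]]] | nodec] := classic (exists C1 C2,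
  [/\ C1 != 0%VS, C2 != 0%VS, (C1 :&: C2 = 0)%VS, (C1 + C2 = C)%VS &
      forall a, (P a :&: C = (P a :&: C) :&: C1 + (P a :&: C) :&: C2)%VS]); last first.
  have := hv _ _ _ (transport_indec hCC hcap hcomp nzC nodec).
  rewrite /rho_eval => -[h0|hf].
    have e := transport hCC hcap hcomp v; rewrite h0 limg0 in e.
    exists C; split; rewrite -?e ?cap0v ?add0v ?subvv //.
    by move=> a; rewrite capv0 add0v.
  have e := transport hCC hcap hcomp v; rewrite hf j_img in e.
  by exists 0%VS; split; rewrite -?e ?capv0 ?addv0 ?sub0v // => a; rewrite capv0 addv0.
have s1 : (C1 <= C)%VS by rewrite -hs12 addvSl.
have s2 : (C2 <= C)%VS by rewrite -hs12 addvSr.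
have e12 := dimv_sum_cap C1 C2; rewrite hs12 h12 dimv0 in e12.
have d1 : (0 < \dim C1)%N by rewrite lt0n dimv_eq0.
have d2 : (0 < \dim C2)%N by rewrite lt0n dimv_eq0.
have [a1 b1 c1] := summand_split hCC hcap hcomp h12 hs12 hc12.
have [a2 b2 c2] : [/\ (C2 + (C1 + C') = W0)%VS, (C2 :&: (C1 + C') = 0)%VS &
   forall a, P a = (P a :&: C2 + P a :&: (C1 + C'))%VS].
  apply: summand_split hCC hcap hcomp _ _ _; rewrite 1?capvC 1?addvC //.
  by move=> a; rewrite addvC; apply: hc12.
have [D1 [sD1 sum1 cap1 cmp1]] := IH C1 _ ltac:(lia) a1 b1 c1.
have [D2 [sD2 sum2 cap2 cmp2]] := IH C2 _ ltac:(lia) a2 b2 c2.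
have hsplit a : (P a :&: C = P a :&: C1 + P a :&: C2)%VS.
  by rewrite {1}(hc12 a) !capv_sub.
have sD : (D1 + D2 <= C)%VS by rewrite -hs12 addvS.
have hsum : (P v :&: C + (D1 + D2) = C)%VS.
  by rewrite hsplit addvACA sum1 sum2.
exists (D1 + D2)%VS; split => //.
- apply/eqP; rewrite -dimv_eq0; apply/eqP.
  have f1 := dimv_sum_cap (P v :&: C) (D1 + D2); rewrite hsum in f1.
  have f2 := dimv_sum_cap (P v :&: C1) (P v :&: C2); rewrite -hsplit in f2.
  have f3 := dimv_sum_cap D1 D2.
  have g1 := dimv_sum_cap (P v :&: C1) D1; rewrite sum1 cap1 dimv0 in g1.
  have g2 := dimv_sum_cap (P v :&: C2) D2; rewrite sum2 cap2 dimv0 in g2.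
  lia.
- move=> a; apply/eqP; rewrite eqEsubv; apply/andP; split.
    rewrite hsplit cmp1 cmp2 addvACA; apply: addvS.
      by rewrite subv_add !capvS ?subvv ?(capvS (subvv _) s1) ?(capvS (subvv _) s2).
    by rewrite subv_add !capvS ?subvv ?addvSl ?addvSr.
  by rewrite subv_add !capvS ?subvv ?capvSr.
Qed.


Lemma decomp v : perfect K v -> exists D, [/\ (P v + D = W0)%VS, (P v :&: D = 0)%VS &
  forall a, P a = (P a :&: P v + P a :&: D)%VS].
Proof.
move=> hv.
have [D [sD hs hc hcmp]] := split_step hv (leqnn (\dim W0)) (addv0 W0) (capv0 W0)
  (fun a => esym (etrans (congr1 (fun U => U + _)%VS (capv_idPl (P_sub a)))
     (etrans (congr1 _ (capv0 (P a))) (addv0 _)))).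
have eV : (P v :&: W0 = P v)%VS by apply/capv_idPl/P_sub.
exists D; rewrite eV in hs hc hcmp; split => // a.
by rewrite -hcmp; apply/esym/capv_idPl/P_sub.
Qed.

Definition Tsp (U : {vspace tT}) := (\sum_(p < 3) (phi vT p @: U))%VS.

Lemma Tsp_mono A B : (A <= B)%VS -> (Tsp A <= Tsp B)%VS.
Proof.
move=> sAB; apply/subv_sumP => p _; apply: subv_trans (limgS _ sAB) _.
exact: (sumv_sup p).
Qed.

Lemma Tsp_add A B : Tsp (A + B)%VS = (Tsp A + Tsp B)%VS.
Proof.
rewrite /Tsp -big_split /=; apply: eq_bigr => p _; exact: limgD.
Qed.

Lemma sum_coord e : (\sum_(p < 3) coord3 p e)%R = sum3 vT e.
Proof. by rewrite sum3E !big_ord_recr big_ord0 /= add0r. Qed.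

Section Disj.
Variables (V D : {vspace tT}).
Hypotheses (hs : (V + D = W0)%VS) (hc : (V :&: D = 0)%VS)
  (hcmp : forall a, P a = (P a :&: V + P a :&: D)%VS).

Lemma sVW : (V <= W0)%VS. Proof. by rewrite -hs addvSl. Qed.
Lemma sDW : (D <= W0)%VS. Proof. by rewrite -hs addvSr. Qed.
Lemma sWR : (W0 <= Rsp Y)%VS. Proof. exact: capvSl. Qed.

Lemma per_p p a b xi xV xD : a \in V -> b \in D -> xi \in W0 ->
  coord3 p xi = coord3 p (a - b)%R -> xV \in V -> xD \in D -> xi = (xV + xD)%R ->
  phi vT p a = phi vT p xV.
Proof.
move=> aV bD xiW hxi xVV xDD exi.
set h := (a - b - xi)%R.
have hW : h \in W0 by apply: memvB => //; apply: memvB; [exact: (subvP sVW) | exact: (subvP sDW)].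
have hP : h \in P (Tx p).
  rewrite /= memv_cap hW andbT /Hp memv_cap (subvP sWR) //= memv_ker phiE.
  by rewrite /h (linearB (coord3 p)) subr_eq0; apply/eqP; exact: (esym hxi).
move: hP; rewrite (hcmp (Tx p)) => /memv_addP [hV /memv_capP [hVP hVV] [hD /memv_capP [_ hDD] eh]].
have t0 : (a - xV - hV = 0)%R.
  apply/eqP; rewrite -memv0 -hc memv_cap; apply/andP; split.
    by rewrite !memvB.
  have -> : (a - xV - hV = b + xD + hD)%R.
    have -> : hV = (h - hD)%R by rewrite eh addrK.
    by rewrite /h exi alg.
  by rewrite !memvD.
have : hV \in lker (phi vT p).
  by move: hVP; rewrite /= memv_cap => /andP [/memv_capP [_ ->]].
rewrite memv_ker; move: t0 => /eqP; rewrite subr_eq add0r => /eqP <-.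
by rewrite linearB /= subr_eq0 => /eqP.
Qed.

Lemma T_disj : (Tsp V :&: Tsp D = 0)%VS.
Proof.
apply/eqP; rewrite -subv0; apply/subvP => w /memv_capP [wV wD]; rewrite memv0.
move/memv_sumP: wV => [vs hvs ew1].
move/memv_sumP: wD => [ws hws ew2].
have : forall p : 'I_3, exists u : tT, u \in V /\ vs p = phi vT p u.
  by move=> p; have /memv_imgP [u uV ->] := hvs p isT; exists u.
move/fin_all_exists => [av hav].
have : forall p : 'I_3, exists u : tT, u \in D /\ ws p = phi vT p u.
  by move=> p; have /memv_imgP [u uV ->] := hws p isT; exists u.
move/fin_all_exists => [bd hbd].
pose c p := (av p - bd p)%R.
have cW p : c p \in W0.
  apply: memvB; [exact: (subvP sVW) (proj1 (hav p)) | exact: (subvP sDW) (proj1 (hbd p))].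
pose o0 : 'I_3 := @Ordinal 3 0 isT.
pose o1 : 'I_3 := @Ordinal 3 1 isT.
pose o2 : 'I_3 := @Ordinal 3 2 isT.
pose xi : tT := ((coord3 o0 (c o0), coord3 o1 (c o1)), coord3 o2 (c o2)).
have xiE p : coord3 p xi = coord3 p (c p).
  case: p => [[|[|[|m]]] hp] //.
  - by rewrite (_ : Ordinal hp = o0) //; apply: val_inj.
  - by rewrite (_ : Ordinal hp = o1) //; apply: val_inj.
  - by rewrite (_ : Ordinal hp = o2) //; apply: val_inj.
have ew : w = (\sum_(p < 3) phi vT p (av p))%R.
  by rewrite ew1; apply: eq_bigr => p _; rewrite (proj2 (hav p)).
have ew' : w = (\sum_(p < 3) phi vT p (bd p))%R.
  by rewrite ew2; apply: eq_bigr => p _; rewrite (proj2 (hbd p)).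
have xiW : xi \in W0.
  rewrite memv_cap; apply/andP; split.
    apply/memRsp => j; rewrite xiE.
    by move/memRsp: ((subvP sWR) _ (cW j)); apply.
  rewrite memv_ker -sum_coord.
  rewrite (eq_bigr (fun p => coord3 p (c p))); last by move=> p _; rewrite xiE.
  rewrite (eq_bigr (fun p => phi vT p (av p) - phi vT p (bd p))%R); last first.
    by move=> p _; rewrite !phiE (linearB (coord3 p)).
  by rewrite sumrB -ew -ew' subrr.
move: (xiW); rewrite -{1}hs => /memv_addP [xV xVV [xD xDD exi]].
have key p : phi vT p (av p) = phi vT p xV.
  apply: (per_p (proj1 (hav p)) (proj1 (hbd p)) xiW _ xVV xDD exi).
  exact: xiE.
rewrite ew (eq_bigr (fun p => coord3 p xV)); last by move=> p _; rewrite key phiE.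
rewrite sum_coord -memv_ker.
by move: (subvP sVW _ xVV); rewrite memv_cap => /andP [].
Qed.
End Disj.
Lemma meet_perfect v u : perfect K v ->
  Ssp X Y (Tmeet v u) = (Ssp X Y v :&: Ssp X Y u)%VS.
Proof.
move=> hv; have [D [hs hc hcmp]] := decomp hv.
rewrite /Ssp -/(Tsp _) -/(Tsp _) -/(Tsp _) /=.
apply/eqP; rewrite eqEsubv; apply/andP; split.
  by rewrite subv_cap !Tsp_mono ?capvSl ?capvSr.
apply/subvP => w /memv_capP [wV wU].
move: wU; rewrite {1}(hcmp u) Tsp_add => /memv_addP [w1 w1T [w2 w2T ew]].
have w2V : w2 \in Tsp (P v).
  have -> : w2 = (w - w1)%R by rewrite ew addrC addKr.
  by apply: (memvB wV); apply: (subvP (Tsp_mono (capvSr _ _))) w1T.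
have w2D : w2 \in Tsp D by apply: (subvP (Tsp_mono (capvSr _ _))) w2T.
have : w2 \in (Tsp (P v) :&: Tsp D)%VS by rewrite memv_cap w2V w2D.
rewrite (T_disj hs hc hcmp) memv0 => /eqP w20.
by rewrite ew w20 addr0 capvC.
Qed.

End Main.

Theorem mainTheorem17 (K : fieldType) (vT : vectType K)
  (X Y : 'I_3 -> {vspace vT}) :
  indecomposable X Y ->
  (forall v1 v2 v3 : dterm, perfect K v1 -> perfect K v2 -> perfect K v3 ->
     Ssp X Y (Tmeet (Tmeet v1 v2) v3)
     = (Ssp X Y v1 :&: Ssp X Y v2 :&: Ssp X Y v3)%VS) /\
  (forall v u : dterm, perfect K v ->
     Ssp X Y (Tmeet v u) = (Ssp X Y v :&: Ssp X Y u)%VS).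
Proof.
move=> _; split; last exact: meet_perfect.
move=> v1 v2 v3 h1 h2 h3.
have -> : Ssp X Y (Tmeet (Tmeet v1 v2) v3) = Ssp X Y (Tmeet v3 (Tmeet v1 v2)).
  by rewrite /Ssp /= capvC.
by rewrite meet_perfect // meet_perfect // capvC.
Qed.
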